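(* For every $n\ge1$, letting $\mathcal{A}^{(1)}_m$ denote the set of $1$-almost-increasing permutations in $S_m$, $$\mathcal{A}^{(1)}_{n+1}=\rho_{1,1}(\mathcal{A}^{(1)}_n)\cup\rho_{1,2}(\mathcal{A}^{(1)}_n)\cup\rho_{2,1}(\mathcal{A}^{(1)}_n)\cup\rho_{2,2}(\mathcal{A}^{(1)}_n).$$
   Context: A permutation $\pi\in S_m$ (one-line form) is $1$-almost-increasing if for every $i\in\{1,\dots,m\}$ there is at most one $j\le i$ with $\pi_j>i$; equivalently, $\pi$ avoids $4321,4312,3421,3412$. For $\pi\in S_n$ and $1\le i,j\le n+1$, $\rho_{i,j}(\pi)\in S_{n+1}$ is obtained by increasing by $1$ every entry of $\pi$ that is $\ge i$ and then inserting the value $i$ so that it occupies position $j$. *)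

(* Defs.v *)
(* Permutations of S_m are 'S_m = {perm 'I_m}; positions and
   values are 0-indexed (paper's value/position k corresponds to ordinal k-1). *)
From mathcomp Require Import all_boot all_order all_fingroup.
Set Implicit Arguments. Unset Strict Implicit. Unset Printing Implicit Defensive.

(* 1-almost-increasing: for every i in {1..m} at most one j <= i with pi_j > i.
   0-indexed with t = i-1 and p = j-1: #{p | p <= t and pi(p) > t} <= 1. *)
Definition almost_inc1 (m : nat) (s : 'S_m) : bool :=
  [forall t : 'I_m, #|[set p : 'I_m | (p <= t)%N && (t < s p)%N]| <= 1].

Definition A1 (m : nat) : {set 'S_m} := [set s : 'S_m | almost_inc1 s].

(* rho_{i,j}(pi): shift every value >= i up by one, insert value i at position j.
   0-indexed: position j gets value i; position q <> j (q = lift j k) gets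
   value bump i (pi k). *)
Definition rho_fun (n : nat) (i j : 'I_n.+1) (s : 'S_n) (q : 'I_n.+1) : 'I_n.+1 :=
  if unlift j q is Some k then lift i (s k) else i.

Lemma rho_fun_inj (n : nat) (i j : 'I_n.+1) (s : 'S_n) : injective (rho_fun i j s).
Proof.
move=> q1 q2; rewrite /rho_fun.
case: unliftP => [k1 ->|->]; case: unliftP => [k2 ->|->] //.
- by move/lift_inj/perm_inj ->.
- by move/eqP; rewrite eq_sym (negbTE (neq_lift _ _)).
- by move/eqP; rewrite (negbTE (neq_lift _ _)).
Qed.

Definition rho (n : nat) (i j : 'I_n.+1) (s : 'S_n) : 'S_n.+1 :=
  perm (@rho_fun_inj n i j s).

(* Main.v *)
Require Import Defs.
From mathcomp Require Import all_boot all_order all_fingroup.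
From mathcomp Require Import zify.
Set Implicit Arguments. Unset Strict Implicit. Unset Printing Implicit Defensive.

Definition cnt (m : nat) (s : 'S_m) (t : nat) :=
  #|[set p : 'I_m | (p <= t)%N && (t < s p)%N]|.

Lemma rhoE n (i j : 'I_n.+1) s q : rho i j s q = rho_fun i j s q.
Proof. by rewrite /rho permE. Qed.

Lemma cnt_rho n (i j : 'I_n.+1) (s : 'S_n) t :
  (i <= 1)%N -> (j <= 1)%N -> cnt (rho i j s) t.+1 = cnt s t.
Proof.
move=> hi hj; rewrite /cnt.
have -> : [set p : 'I_n.+1 | (p <= t.+1)%N && (t.+1 < rho i j s p)%N]
   = lift j @: [set p : 'I_n | (p <= t)%N && (t < s p)%N].
  apply/setP => p; rewrite !inE.
  case: (unliftP j p) => [k ->|->].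
  - rewrite (mem_imset _ _ (@lift_inj _ j)) inE rhoE /rho_fun liftK.
    rewrite /= /bump; move: (s k) => v; case: k => k hk /=.
    by case: (leqP j k) => hjk; case: (leqP i v) => hik /=;
      apply/idP/idP => /andP[? ?]; apply/andP; split; lia.
  - rewrite rhoE /rho_fun unlift_none.
    have -> : (t.+1 < i)%N = false by lia.
    rewrite andbF; apply/esym/negbTE/imsetP => -[k _] /eqP.
    by rewrite (negbTE (neq_lift _ _)).
by rewrite card_imset //; apply: lift_inj.
Qed.

Lemma cnt0 m (s : 'S_m) : (cnt s 0 <= 1)%N.
Proof.
rewrite /cnt; case: m s => [|m] s.
  by rewrite (leq_trans (max_card _)) // card_ord.
apply: leq_trans (_ : #|[set (@ord0 m)]| <= 1)%N; last by rewrite cards1.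
apply: subset_leq_card; apply/subsetP => p; rewrite !inE => /andP[hp _].
by apply/eqP/val_inj => /=; lia.
Qed.

Lemma A1_rho n (i j : 'I_n.+1) (s : 'S_n) :
  (i <= 1)%N -> (j <= 1)%N -> (rho i j s \in A1 n.+1) = (s \in A1 n).
Proof.
move=> hi hj; rewrite !inE /almost_inc1.
apply/forallP/forallP => H t.
- have := H (lift ord0 t).
  by rewrite -/(cnt _ _) -/(cnt _ _) /= /bump /= add1n cnt_rho.
- case: (unliftP ord0 t) => [k ->|->].
  + by rewrite -/(cnt _ _) /= /bump /= add1n cnt_rho //; exact: H.
  + exact: cnt0.
Qed.

Definition sub_fun n (r : 'S_n.+1) (i j : 'I_n.+1) (k : 'I_n) : 'I_n :=
  if unlift i (r (lift j k)) is Some x then x else k.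

Lemma sub_funE n (r : 'S_n.+1) i j k : r j = i -> lift i (sub_fun r i j k) = r (lift j k).
Proof.
move=> rji; rewrite /sub_fun.
case: unliftP => [x ->|] //.
by rewrite -rji => /perm_inj /eqP; rewrite eq_sym (negbTE (neq_lift _ _)).
Qed.

Lemma rho_surj n (r : 'S_n.+1) i j : r j = i -> exists s, r = rho i j s.
Proof.
move=> rji.
have inj : injective (sub_fun r i j).
  move=> k1 k2 e.
  have := congr1 (lift i) e; rewrite !sub_funE // => /perm_inj /lift_inj //.
exists (perm inj); apply/permP => q; rewrite rhoE /rho_fun.
case: unliftP => [k ->|->] //.
by rewrite permE sub_funE.
Qed.

Lemma A1_pos n (r : 'S_n.+1) : (1 <= n)%N -> r \in A1 n.+1 ->
  exists j : 'I_n.+1, (j <= 1)%N && (r j <= 1)%N.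
Proof.
move=> hn; rewrite inE /almost_inc1 => /forallP /(_ (inord 1)).
rewrite inordK; last by lia.
move=> H.
case h0: (r ord0 <= 1)%N; first by exists ord0; rewrite h0.
case h1: (r (inord 1) <= 1)%N.
  by exists (inord 1); rewrite h1 inordK //; lia.
exfalso; move: H; apply/negP; rewrite -ltnNge.
have ne : (@ord0 n) != inord 1.
  by apply/eqP => /(congr1 val); rewrite /= inordK //; lia.
apply: (@leq_trans #|[set (@ord0 n); inord 1]|); first by rewrite cards2 ne.
apply: subset_leq_card; apply/subsetP => p; rewrite !inE => /orP[]/eqP ->.
  by rewrite /=; lia.
by rewrite inordK //; lia.
Qed.

(* paper indices 1,2 are the ordinals 0 and 1 (= inord 1, valid as n >= 1) *)
Theorem theorem7p4 (n : nat) (hn : (1 <= n)%N) :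
  A1 n.+1 =
    [set rho ord0 ord0 s | s in A1 n] :|: [set rho ord0 (inord 1) s | s in A1 n]
    :|: [set rho (inord 1) ord0 s | s in A1 n]
    :|: [set rho (inord 1) (inord 1) s | s in A1 n].
Proof.
have v1 : (inord 1 : 'I_n.+1) = 1 :> nat by rewrite inordK //; lia.
have cases (x : 'I_n.+1) : (x <= 1)%N -> x = ord0 \/ x = inord 1.
  move=> hx; case: (posnP x) => h; [left | right]; apply: val_inj => /=; lia.
apply/setP => r; rewrite !in_setU; apply/idP/idP.
  move=> rA; have [j /andP[hj hi]] := A1_pos hn rA.
  have [s rs] := rho_surj (erefl (r j)).
  have sA : s \in A1 n by rewrite -(A1_rho s hi hj) -rs.
  have mem (a b : 'I_n.+1) : r = rho a b s -> r \in [set rho a b s | s in A1 n].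
    by move=> ->; apply/imsetP; exists s.
  by case: (cases _ hi) => ei; case: (cases _ hj) => ej; rewrite ei ej in rs;
    rewrite (mem _ _ rs) ?orbT.
by move=> /orP[/orP[/orP[]|]|] /imsetP[s sA ->]; rewrite A1_rho // ?v1.
Qed.
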